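(* $\mathcal C_q^{3,4,\infty,\infty}\neq\mathcal C_{qs}^{3,4,\infty,\infty}$.
   Context: A strategy: Hilbert spaces $\mathcal H_A,\mathcal H_B$ (possibly infinite-dimensional), a unit vector $|\psi\rangle\in\mathcal H_A\otimes\mathcal H_B$, and projective measurements $\{A^a_x\}_{a\in\mathcal A}$ on $\mathcal H_A$, $\{B^b_y\}_{b\in\mathcal B}$ on $\mathcal H_B$, producing $p(a,b|x,y)=\langle\psi|A^a_x\otimes B^b_y|\psi\rangle$. $\mathcal C_{qs}^{3,4,\infty,\infty}$ is the set of correlations with question sets of sizes 3 and 4 and countably infinite answer sets produced by some strategy; $\mathcal C_{q}^{3,4,\infty,\infty}$ is the subset produced by strategies whose state $|\psi\rangle$ has finite Schmidt rank. *)

(* Defs.v *)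
(* Complex numbers are modelled as pairs of reals;
   the (separable) Hilbert space is l^2(N) of complex sequences, and the
   bipartite space H_A (x) H_B is l^2(N x N) (complex double sequences). *)
From Stdlib Require Import Reals.
Open Scope R_scope.

Definition C : Type := (R * R)%type.
Definition C0 : C := (0, 0).
Definition Cadd (z w : C) : C := (fst z + fst w, snd z + snd w).
Definition Cmul (z w : C) : C :=
  (fst z * fst w - snd z * snd w, fst z * snd w + snd z * fst w).
Definition Cconj (z : C) : C := (fst z, - snd z).
Definition Copp (z : C) : C := (- fst z, - snd z).
Definition Cnorm2 (z : C) : R := fst z * fst z + snd z * snd z.

Definition csum_to (f : nat -> C) (l : C) : Prop :=
  infinite_sum (fun n => fst (f n)) (fst l) /\
  infinite_sum (fun n => snd (f n)) (snd l).

Fixpoint Csum (n : nat) (f : nat -> C) : C :=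
  match n with
  | O => C0
  | S m => Cadd (Csum m f) (f m)
  end.

Definition vec : Type := nat -> C.
Definition is_l2 (v : vec) : Prop :=
  exists l, infinite_sum (fun i => Cnorm2 (v i)) l.

Definition inner_is (u v : vec) (l : C) : Prop :=
  csum_to (fun i => Cmul (Cconj (u i)) (v i)) l.

(** Operators on l^2(N) (only their action on l^2 vectors matters) *)
Definition op : Type := vec -> vec.

Definition is_linear_l2 (A : op) : Prop :=
  forall (u v : vec) (c : C), is_l2 u -> is_l2 v ->
    forall i, A (fun k => Cadd (u k) (Cmul c (v k))) i
              = Cadd (A u i) (Cmul c (A v i)).

Definition is_projection (A : op) : Prop :=
  (forall v, is_l2 v -> is_l2 (A v)) /\
  is_linear_l2 A /\
  (forall v, is_l2 v -> forall i, A (A v) i = A v i) /\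
  (forall u v, is_l2 u -> is_l2 v ->
     exists l, inner_is (A u) v l /\ inner_is u (A v) l).

Fixpoint vsum (n : nat) (f : nat -> vec) : vec :=
  match n with
  | O => fun _ => C0
  | S m => fun i => Cadd (vsum m f i) (f m i)
  end.

(** Projective measurement with outcome set N: projections summing to the
    identity in the strong operator topology. *)
Definition is_PVM (A : nat -> op) : Prop :=
  (forall a, is_projection (A a)) /\
  (forall v, is_l2 v ->
     forall eps, eps > 0 -> exists N0, forall N, (N >= N0)%nat ->
       forall l, infinite_sum
                   (fun i => Cnorm2 (Cadd (vsum N (fun a => A a v) i) (Copp (v i)))) l ->
                 l < eps).

(** Bipartite states: psi i j, i indexes H_A = l^2(N), j indexes H_B = l^2(N) *)
Definition bivec : Type := nat -> nat -> C.

Definition is_unit_state (psi : bivec) : Prop :=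
  exists r : nat -> R,
    (forall i, infinite_sum (fun j => Cnorm2 (psi i j)) (r i)) /\
    infinite_sum r 1.

(** A (x) I and I (x) B acting on bipartite vectors *)
Definition tensor_left (A : op) (psi : bivec) : bivec :=
  fun i j => A (fun i' => psi i' j) i.
Definition tensor_right (B : op) (psi : bivec) : bivec :=
  fun i j => B (psi i) j.

(** <psi | (A (x) B) | psi> = p  (as an iterated, absolutely convergent sum) *)
Definition expect_is (psi : bivec) (A B : op) (p : R) : Prop :=
  let phi := tensor_left A (tensor_right B psi) in
  exists rowsum : nat -> C,
    (forall i, csum_to (fun j => Cmul (Cconj (psi i j)) (phi i j)) (rowsum i)) /\
    csum_to rowsum (p, 0).

Definition finite_schmidt_rank (psi : bivec) : Prop :=
  exists (r : nat) (u v : nat -> vec),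
    (forall k, (k < r)%nat -> is_l2 (u k) /\ is_l2 (v k)) /\
    (forall i j, psi i j = Csum r (fun k => Cmul (u k i) (v k j))).

(** Correlations p a b x y with x in {0,1,2}, y in {0,1,2,3}, a b in N *)
Definition correlation : Type := nat -> nat -> nat -> nat -> R.

Definition produces (p : correlation) (psi : bivec)
    (A : nat -> nat -> op) (B : nat -> nat -> op) : Prop :=
  is_unit_state psi /\
  (forall x, (x < 3)%nat -> is_PVM (A x)) /\
  (forall y, (y < 4)%nat -> is_PVM (B y)) /\
  (forall x y a b, (x < 3)%nat -> (y < 4)%nat ->
     expect_is psi (A x a) (B y b) (p a b x y)).

Definition C_qs_3_4 (p : correlation) : Prop :=
  exists psi A B, produces p psi A B.

Definition C_q_3_4 (p : correlation) : Prop :=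
  exists psi A B, produces p psi A B /\ finite_schmidt_rank psi.

(* Main.v *)
Require Import Defs.
From Stdlib Require Import Reals.
From Stdlib Require Import Reals Lra Lia List Arith Compare_dec Classical FunctionalExtensionality ClassicalEpsilon.
Require Import Defs.
Import ListNotations.
Open Scope R_scope.

Lemma is_ext (f g : nat -> R) l : (forall n, f n = g n) -> infinite_sum f l -> infinite_sum g l.
Proof. intros H; replace g with f; auto. apply functional_extensionality; auto. Qed.

Lemma sum_scal a f n : sum_f_R0 (fun i => a * f i) n = a * sum_f_R0 f n.
Proof. induction n; simpl; [|rewrite IHn]; ring. Qed.

Lemma is_lin2 f g l1 l2 a b : infinite_sum f l1 -> infinite_sum g l2 ->
  infinite_sum (fun n => a * f n + b * g n) (a * l1 + b * l2).
Proof.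
  intros Hf Hg.
  assert (Ha : Un_cv (fun n => a * sum_f_R0 f n) (a * l1)).
  { apply (CV_mult (fun _ => a) _ a l1); auto. intros e He; exists 0%nat; intros; unfold Rdist; rewrite Rminus_diag, Rabs_R0; lra. }
  assert (Hb : Un_cv (fun n => b * sum_f_R0 g n) (b * l2)).
  { apply (CV_mult (fun _ => b) _ b l2); auto. intros e He; exists 0%nat; intros; unfold Rdist; rewrite Rminus_diag, Rabs_R0; lra. }
  pose proof (CV_plus _ _ _ _ Ha Hb) as H.
  intros e He. destruct (H e He) as [N HN]. exists N. intros n Hn.
  rewrite sum_plus, !sum_scal. apply HN; auto.
Qed.

Lemma is_lin f g h l1 l2 l a b : infinite_sum f l1 -> infinite_sum g l2 ->
  (forall n, h n = a * f n + b * g n) -> l = a * l1 + b * l2 -> infinite_sum h l.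
Proof. intros H1 H2 H3 H4; subst l. eapply is_ext; [|apply is_lin2; eauto]. intros; simpl; auto. Qed.

Lemma sum_single (f : nat -> R) a : (forall n, n <> a -> f n = 0) ->
  forall n, sum_f_R0 f n = if Nat.ltb n a then 0 else f a.
Proof.
  intros H. induction n as [|n IH].
  - simpl. destruct a; simpl. reflexivity. apply H; lia.
  - simpl. rewrite IH. destruct (Nat.ltb_spec n a), (Nat.ltb_spec (S n) a).
    + rewrite H by lia; lra.
    + assert (S n = a) by lia. subst. lra.
    + lia.
    + rewrite (H (S n)) by lia. lra.
Qed.

Lemma is_single (f : nat -> R) a l : (forall n, n <> a -> f n = 0) -> f a = l -> infinite_sum f l.
Proof.
  intros H Hl e He. exists a. intros n Hn. rewrite (sum_single f a H n).
  destruct (Nat.ltb_spec n a); [lia|]. unfold Rdist. rewrite Hl, Rminus_diag, Rabs_R0; lra.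
Qed.

Lemma Ceq (z w : C) : fst z = fst w -> snd z = snd w -> z = w.
Proof. destruct z, w; simpl; intros; subst; reflexivity. Qed.

Lemma Csum_ext n f g : (forall k, (k < n)%nat -> f k = g k) -> Csum n f = Csum n g.
Proof. induction n; intros H; simpl; auto. rewrite IHn by (intros; apply H; lia). rewrite H by lia. auto. Qed.

Lemma Cconj_Csum n f : Cconj (Csum n f) = Csum n (fun k => Cconj (f k)).
Proof. induction n; simpl. apply Ceq; simpl; ring. rewrite <- IHn. apply Ceq; simpl; ring. Qed.

Lemma Cmul_Csum_l n f z : Cmul (Csum n f) z = Csum n (fun k => Cmul (f k) z).
Proof. induction n; simpl. apply Ceq; simpl; ring. rewrite <- IHn. apply Ceq; simpl; ring. Qed.

Lemma Cmul_Csum_r n f z : Cmul z (Csum n f) = Csum n (fun k => Cmul z (f k)).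
Proof. induction n; simpl. apply Ceq; simpl; ring. rewrite <- IHn. apply Ceq; simpl; ring. Qed.

Lemma Cmul_comm z w : Cmul z w = Cmul w z.
Proof. apply Ceq; simpl; ring. Qed.

Lemma csum_ext f g l : (forall n, f n = g n) -> csum_to f l -> csum_to g l.
Proof. intros H; replace g with f; auto. apply functional_extensionality; auto. Qed.

Lemma csum_unique f l1 l2 : csum_to f l1 -> csum_to f l2 -> l1 = l2.
Proof. intros [H1 H2] [H3 H4]. apply Ceq; eapply uniqueness_sum; eauto. Qed.

Lemma csum_add f g l1 l2 : csum_to f l1 -> csum_to g l2 ->
  csum_to (fun n => Cadd (f n) (g n)) (Cadd l1 l2).
Proof.
  intros [H1 H2] [H3 H4]. split; simpl.
  - apply (is_lin _ _ _ _ _ _ 1 1 H1 H3); intros; simpl; ring.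
  - apply (is_lin _ _ _ _ _ _ 1 1 H2 H4); intros; simpl; ring.
Qed.

Lemma csum_scal_l f z l : csum_to f l -> csum_to (fun n => Cmul z (f n)) (Cmul z l).
Proof.
  intros [H1 H2]. split; simpl.
  - apply (is_lin _ _ _ _ _ _ (fst z) (- snd z) H1 H2); intros; simpl; ring.
  - apply (is_lin _ _ _ _ _ _ (snd z) (fst z) H1 H2); intros; simpl; ring.
Qed.

Lemma csum_scal_r f z l : csum_to f l -> csum_to (fun n => Cmul (f n) z) (Cmul l z).
Proof.
  intros H. rewrite Cmul_comm. eapply csum_ext; [|apply csum_scal_l; eauto]. intros; apply Cmul_comm.
Qed.

Lemma is_zero : infinite_sum (fun _ => 0) 0.
Proof. apply (is_single _ 0%nat); auto. Qed.

Lemma csum_zero : csum_to (fun _ => C0) C0.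
Proof. split; simpl; apply is_zero. Qed.

Lemma csum_Csum n (f : nat -> nat -> C) L : (forall k, (k < n)%nat -> csum_to (f k) (L k)) ->
  csum_to (fun j => Csum n (fun k => f k j)) (Csum n L).
Proof.
  induction n; intros H; simpl. apply csum_zero.
  apply csum_add. apply IHn; intros; apply H; lia. apply H; lia.
Qed.

Lemma csum_single (f : nat -> C) a l : (forall n, n <> a -> fst (f n) = 0 /\ snd (f n) = 0) ->
  f a = l -> csum_to f l.
Proof.
  intros H Hl; subst; split; apply (is_single _ a); auto; intros n Hn; apply H; auto.
Qed.

Lemma Cnorm2_nonneg z : 0 <= Cnorm2 z.
Proof. unfold Cnorm2; nra. Qed.

Lemma l2_lin u v c : is_l2 u -> is_l2 v -> is_l2 (fun k => Cadd (u k) (Cmul c (v k))).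
Proof.
  intros [lu Hu] [lv Hv].
  assert (Hb : infinite_sum (fun n => 2 * Cnorm2 (u n) + (2 * Cnorm2 c) * Cnorm2 (v n))
                (2 * lu + (2 * Cnorm2 c) * lv)).
  { apply (is_lin _ _ _ _ _ _ 2 (2 * Cnorm2 c) Hu Hv); auto. }
  destruct (Rseries_CV_comp (fun k => Cnorm2 (Cadd (u k) (Cmul c (v k))))
      (fun n => 2 * Cnorm2 (u n) + (2 * Cnorm2 c) * Cnorm2 (v n))) as [l Hl].
  - intros n. split. apply Cnorm2_nonneg.
    destruct (u n) as [a b], (v n) as [x y], c as [c1 c2]. unfold Cnorm2, Cadd, Cmul; simpl.
    pose proof (pow2_ge_0 (a - (c1 * x - c2 * y))). pose proof (pow2_ge_0 (b - (c1 * y + c2 * x))).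
    nra.
  - exists (2 * lu + (2 * Cnorm2 c) * lv). exact Hb.
  - exists l. exact Hl.
Qed.

Lemma l2_zero : is_l2 (fun _ => C0).
Proof. exists 0. eapply is_ext; [|apply is_zero]. intros; unfold Cnorm2; simpl; ring. Qed.

Lemma l2_Csum n (c : nat -> C) (w : nat -> vec) : (forall k, (k < n)%nat -> is_l2 (w k)) ->
  is_l2 (fun j => Csum n (fun k => Cmul (c k) (w k j))).
Proof.
  induction n; intros H; simpl. apply l2_zero.
  apply (l2_lin (fun j => Csum n (fun k => Cmul (c k) (w k j))) (w n) (c n)).
  apply IHn; intros; apply H; lia. apply H; lia.
Qed.

Lemma op_zero (A : op) : is_linear_l2 A -> forall i, A (fun _ => C0) i = C0.
Proof.
  intros HL i.
  assert (H : A (fun _ => C0) i = Cadd (A (fun _ => C0) i) (Cmul (1,0) (A (fun _ => C0) i))).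
  { rewrite <- (HL (fun _ => C0) (fun _ => C0) (1, 0) l2_zero l2_zero i).
    f_equal. apply functional_extensionality; intros; apply Ceq; simpl; ring. }
  revert H. generalize (A (fun _ => C0) i). intros [x y] H.
  unfold Cadd, Cmul in H; simpl in H.
  assert (H1 := f_equal fst H); assert (H2 := f_equal snd H); simpl in H1, H2.
  apply Ceq; simpl; lra.
Qed.

Lemma op_Csum (A : op) : is_linear_l2 A -> forall n (c : nat -> C) (w : nat -> vec),
  (forall k, (k < n)%nat -> is_l2 (w k)) -> forall i,
  A (fun j => Csum n (fun k => Cmul (c k) (w k j))) i = Csum n (fun k => Cmul (c k) (A (w k) i)).
Proof.
  intros HL n; induction n; intros c w Hw i; simpl.
  - apply op_zero; auto.
  - rewrite <- IHn by (intros; apply Hw; lia).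
    apply (HL (fun j => Csum n (fun k => Cmul (c k) (w k j))) (w n) (c n)).
    apply l2_Csum; intros; apply Hw; lia. apply Hw; lia.
Qed.

Lemma expect_fsr (psi : bivec) (A B : op) r u v al be p :
  is_projection A -> is_projection B ->
  (forall k, (k < r)%nat -> is_l2 (u k) /\ is_l2 (v k)) ->
  (forall i j, psi i j = Csum r (fun k => Cmul (u k i) (v k j))) ->
  (forall l k, (l < r)%nat -> (k < r)%nat ->
     csum_to (fun i => Cmul (Cconj (u l i)) (A (u k) i)) (al l k)) ->
  (forall l k, (l < r)%nat -> (k < r)%nat ->
     csum_to (fun j => Cmul (Cconj (v l j)) (B (v k) j)) (be l k)) ->
  expect_is psi A B p ->
  (p, 0) = Csum r (fun l => Csum r (fun k => Cmul (al l k) (be l k))).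
Proof.
  intros [_ [HLA _]] [_ [HLB _]] Huv Hpsi Hal Hbe [rowsum [Hrow Htot]].
  assert (Hphi : forall i j, tensor_left A (tensor_right B psi) i j
                  = Csum r (fun k => Cmul (B (v k) j) (A (u k) i))).
  { intros i j. unfold tensor_left, tensor_right.
    assert (E1 : forall i', B (psi i') j = Csum r (fun k => Cmul (u k i') (B (v k) j))).
    { intros i'.
      replace (psi i') with (fun j => Csum r (fun k => Cmul (u k i') (v k j)))
        by (apply functional_extensionality; intros; symmetry; apply Hpsi).
      apply op_Csum; auto. intros; apply Huv; auto. }
    replace (fun i' => B (psi i') j) with (fun i' => Csum r (fun k => Cmul (B (v k) j) (u k i'))).
    - apply op_Csum; auto. intros; apply Huv; auto.
    - apply functional_extensionality; intros i'. rewrite E1. apply Csum_ext; intros; apply Cmul_comm. }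
  assert (Hterm : forall i j, Cmul (Cconj (psi i j)) (tensor_left A (tensor_right B psi) i j)
     = Csum r (fun l => Csum r (fun k => Cmul (Cmul (Cconj (u l i)) (A (u k) i))
                                               (Cmul (Cconj (v l j)) (B (v k) j))))).
  { intros. rewrite Hphi, Hpsi, Cconj_Csum, Cmul_Csum_l. apply Csum_ext; intros l Hl.
    rewrite Cmul_Csum_r. apply Csum_ext; intros k Hk. apply Ceq; simpl; ring. }
  assert (Hr : forall i, rowsum i = Csum r (fun l => Csum r (fun k =>
                 Cmul (Cmul (Cconj (u l i)) (A (u k) i)) (be l k)))).
  { intros i. eapply csum_unique. apply Hrow.
    eapply csum_ext. intros j; symmetry; apply Hterm.
    apply csum_Csum; intros l Hl. apply csum_Csum; intros k Hk.
    apply csum_scal_l. apply Hbe; auto. }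
  eapply csum_unique. eapply csum_ext. apply Hr. exact Htot.
  apply csum_Csum; intros l Hl. apply csum_Csum; intros k Hk.
  apply csum_scal_r. apply Hal; auto.
Qed.

Fixpoint RS {T} (l : list T) (g : T -> R) : R :=
  match l with nil => 0 | t :: l' => g t + RS l' g end.

Lemma RS_app {T} (l1 l2 : list T) g : RS (l1 ++ l2) g = RS l1 g + RS l2 g.
Proof. induction l1; simpl; [|rewrite IHl1]; ring. Qed.

Lemma RS_ext {T} (l : list T) g h : (forall t, g t = h t) -> RS l g = RS l h.
Proof. intros H; induction l; simpl; auto. rewrite H, IHl; auto. Qed.

Lemma RS_flat_map {T U} (l : list T) (F : T -> list U) g :
  RS (flat_map F l) g = RS l (fun t => RS (F t) g).
Proof. induction l; simpl; auto. rewrite RS_app, IHl; auto. Qed.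

Lemma fst_Csum n f : fst (Csum n f) = RS (seq 0 n) (fun k => fst (f k)).
Proof. induction n. reflexivity. rewrite seq_S, RS_app, <- IHn. cbn [Csum]. simpl; ring. Qed.

Lemma RS_lin {T} (l : list T) f g h k :
  RS l (fun t => (f t - k * g t) * h t) = RS l (fun t => f t * h t) - k * RS l (fun t => g t * h t).
Proof. induction l; simpl; [|rewrite IHl]; ring. Qed.

Lemma linalg {T} (cs : list T) : forall (x y : nat -> T -> R),
  (forall a b, (a <= length cs)%nat -> (b <= length cs)%nat -> a <> b ->
     RS cs (fun c => x a c * y b c) = 0) ->
  (forall a, (a <= length cs)%nat -> RS cs (fun c => x a c * y a c) <> 0) -> False.
Proof.
  induction cs as [|c cs IH]; intros x y H0 H1.
  - apply (H1 0%nat); simpl; auto.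
  - simpl length in *. set (n := length cs) in *.
    destruct (classic (exists a0, (a0 <= S n)%nat /\ x a0 c <> 0)) as [[a0 [Ha0 Hx]]|Hno].
    + set (skip := fun a => if Nat.ltb a a0 then a else S a).
      assert (Sk1 : forall a, (a <= n)%nat -> (skip a <= S n)%nat).
      { intros a Ha; unfold skip; destruct (Nat.ltb_spec a a0); lia. }
      assert (Sk2 : forall a, skip a <> a0).
      { intros a; unfold skip; destruct (Nat.ltb_spec a a0); lia. }
      assert (Sk3 : forall a b, a <> b -> skip a <> skip b).
      { intros a b; unfold skip; destruct (Nat.ltb_spec a a0), (Nat.ltb_spec b a0); lia. }
      set (x' := fun a t => x (skip a) t - (x (skip a) c / x a0 c) * x a0 t).
      set (y' := fun b t => y (skip b) t).
      assert (Key : forall a b, RS cs (fun t => x' a t * y' b t)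
                       = RS (c :: cs) (fun t => x (skip a) t * y (skip b) t)
                         - (x (skip a) c / x a0 c) * RS (c :: cs) (fun t => x a0 t * y (skip b) t)).
      { intros a b. unfold x', y'. rewrite RS_lin. simpl. field. auto. }
      apply (IH x' y').
      * intros a b Ha Hb Hab. rewrite Key, H0, (H0 a0); auto; try ring.
      * intros a Ha. rewrite Key, (H0 a0); auto.
        rewrite Rmult_0_r, Rminus_0_r. apply H1; auto.
    + assert (Hz : forall a, (a <= S n)%nat -> x a c = 0).
      { intros a Ha. apply NNPP; intro E; apply Hno; eauto. }
      apply (IH x y).
      * intros a b Ha Hb Hab. rewrite <- (H0 a b) by lia. simpl. rewrite Hz by lia. ring.
      * intros a Ha. intro E. apply (H1 a). lia. simpl. rewrite Hz by lia. rewrite E; ring.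
Qed.

Definition cs (r : nat) : list (nat * nat * bool) :=
  flat_map (fun l => flat_map (fun k => [(l, k, true); (l, k, false)]) (seq 0 r)) (seq 0 r).
Definition xx (al : nat -> nat -> C) (t : nat * nat * bool) : R :=
  match t with (l, k, bo) => if bo then fst (al l k) else snd (al l k) end.
Definition yy (be : nat -> nat -> C) (t : nat * nat * bool) : R :=
  match t with (l, k, bo) => if bo then fst (be l k) else - snd (be l k) end.

Lemma RS_cs r al be : RS (cs r) (fun t => xx al t * yy be t)
  = fst (Csum r (fun l => Csum r (fun k => Cmul (al l k) (be l k)))).
Proof.
  unfold cs. rewrite RS_flat_map, fst_Csum. apply RS_ext; intros l.
  rewrite RS_flat_map, fst_Csum. apply RS_ext; intros k. simpl. ring.
Qed.

Lemma choice_fun {T U} (P : T -> U -> Prop) : (forall t, exists z, P t z) -> exists f, forall t, P t (f t).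
Proof.
  intros H. exists (fun t => proj1_sig (constructive_indefinite_description _ (H t))).
  intros t. exact (proj2_sig (constructive_indefinite_description _ (H t))).
Qed.

Lemma not_Cq (p : correlation) (q : nat -> R) : (forall a, q a <> 0) ->
  (forall a b, p a b 0%nat 0%nat = if Nat.eqb a b then q a else 0) -> ~ C_q_3_4 p.
Proof.
  intros Hq Hp [psi [A [B [[Hunit [HA [HB Hexp]]] [r [u [v [Huv Hpsi]]]]]]]].
  assert (HA0 : forall a, is_projection (A 0%nat a)) by (intros; apply (HA 0%nat); lia).
  assert (HB0 : forall b, is_projection (B 0%nat b)) by (intros; apply (HB 0%nat); lia).
  destruct (choice_fun (fun (t : nat * (nat * nat)) z => let '(a, (l, k)) := t in
     (l < r)%nat -> (k < r)%nat -> csum_to (fun i => Cmul (Cconj (u l i)) (A 0%nat a (u k) i)) z))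
    as [al Hal].
  { intros [a [l k]]. destruct (lt_dec l r) as [Hl|Hl]; [destruct (lt_dec k r) as [Hk|Hk]|].
    - destruct (HA0 a) as [_ [_ [_ Hsa]]].
      destruct (Hsa (u l) (u k)) as [z [_ Hz]]; try apply Huv; auto.
      exists z; intros; exact Hz.
    - exists C0; intros; lia.
    - exists C0; intros; lia. }
  destruct (choice_fun (fun (t : nat * (nat * nat)) z => let '(b, (l, k)) := t in
     (l < r)%nat -> (k < r)%nat -> csum_to (fun j => Cmul (Cconj (v l j)) (B 0%nat b (v k) j)) z))
    as [be Hbe].
  { intros [b [l k]]. destruct (lt_dec l r) as [Hl|Hl]; [destruct (lt_dec k r) as [Hk|Hk]|].
    - destruct (HB0 b) as [_ [_ [_ Hsa]]].
      destruct (Hsa (v l) (v k)) as [z [_ Hz]]; try apply Huv; auto.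
      exists z; intros; exact Hz.
    - exists C0; intros; lia.
    - exists C0; intros; lia. }
  assert (Hab : forall a b, p a b 0%nat 0%nat =
     RS (cs r) (fun t => xx (fun l k => al (a, (l, k))) t * yy (fun l k => be (b, (l, k))) t)).
  { intros a b. rewrite RS_cs.
    assert (E := expect_fsr psi (A 0%nat a) (B 0%nat b) r u v (fun l k => al (a, (l, k)))
                   (fun l k => be (b, (l, k))) (p a b 0%nat 0%nat) (HA0 a) (HB0 b) Huv Hpsi).
    rewrite <- E; auto.
    - intros l k Hl Hk; apply (Hal (a, (l, k))); auto.
    - intros l k Hl Hk; apply (Hbe (b, (l, k))); auto.
    - apply Hexp; lia. }
  apply (linalg (cs r) (fun a => xx (fun l k => al (a, (l, k)))) (fun b => yy (fun l k => be (b, (l, k))))).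
  - intros a b _ _ Hne. rewrite <- Hab, Hp. destruct (Nat.eqb_spec a b); [contradiction|auto].
  - intros a _. rewrite <- Hab, Hp, Nat.eqb_refl. auto.
Qed.

Definition cc (i : nat) : R := 3/5 * (4/5) ^ i.
Definition psi0 : bivec := fun i j => if Nat.eqb i j then (cc i, 0) else C0.
Definition Pr (a : nat) : op := fun v i => if Nat.eqb i a then v i else C0.
Definition p0 : correlation := fun a b x y => if Nat.eqb a b then cc a * cc a else 0.

Lemma cc_pos i : 0 < cc i.
Proof. unfold cc. apply Rmult_lt_0_compat. lra. apply pow_lt; lra. Qed.

Lemma unit_psi0 : is_unit_state psi0.
Proof.
  exists (fun i => cc i * cc i). split.
  - intros i. apply (is_single _ i).
    + intros j Hj. unfold psi0. destruct (Nat.eqb_spec i j); [lia|]. unfold Cnorm2; simpl; ring.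
    + unfold psi0. rewrite Nat.eqb_refl. unfold Cnorm2; simpl; ring.
  - assert (H := GP_infinite (16/25)). unfold Pser in H.
    assert (H1 : infinite_sum (fun n => 1 * (16/25) ^ n) (/ (1 - 16/25))).
    { apply H. rewrite Rabs_right; lra. }
    apply (is_lin _ _ _ _ _ _ (9/25) 0 H1 is_zero).
    + intros n. cbv beta. unfold cc. replace (16/25) with (4/5 * (4/5)) by field.
      rewrite Rpow_mult_distr. field.
    + field.
Qed.

Lemma proj_Pr a : is_projection (Pr a).
Proof.
  split; [|split; [|split]].
  - intros v Hv. exists (Cnorm2 (v a)). apply (is_single _ a).
    + intros n Hn. unfold Pr. destruct (Nat.eqb_spec n a); [lia|]. unfold Cnorm2; simpl; ring.
    + unfold Pr. rewrite Nat.eqb_refl. auto.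
  - intros u v c _ _ i. unfold Pr. destruct (Nat.eqb i a); auto. apply Ceq; simpl; ring.
  - intros v _ i. unfold Pr. destruct (Nat.eqb i a); auto.
  - intros u v _ _. exists (Cmul (Cconj (u a)) (v a)). split; apply (csum_single _ a).
    + intros n Hn. unfold Pr. destruct (Nat.eqb_spec n a); [lia|]. simpl; split; ring.
    + unfold Pr. rewrite Nat.eqb_refl. auto.
    + intros n Hn. unfold Pr. destruct (Nat.eqb_spec n a); [lia|]. simpl; split; ring.
    + unfold Pr. rewrite Nat.eqb_refl. auto.
Qed.

Fixpoint psum (f : nat -> R) (N : nat) : R :=
  match N with O => 0 | S m => psum f m + f m end.

Lemma sum_psum f n : sum_f_R0 f n = psum f (S n).
Proof. induction n; simpl in *; [|rewrite IHn]; ring. Qed.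

Lemma vsum_Pr v N i : vsum N (fun a => Pr a v) i = if Nat.ltb i N then v i else C0.
Proof.
  induction N; simpl. reflexivity.
  rewrite IHN. unfold Pr.
  destruct (Nat.ltb_spec i N), (Nat.eqb_spec i N), (Nat.ltb_spec i (S N)); try lia;
    apply Ceq; simpl; ring.
Qed.

Lemma pvm_Pr : is_PVM Pr.
Proof.
  split. apply proj_Pr.
  intros v [L HL] eps Heps.
  set (f := fun i => Cnorm2 (v i)).
  destruct (HL eps Heps) as [N1 HN1].
  exists (S N1). intros N HN l Hl.
  set (g := fun i => if Nat.ltb i N then 0 else f i).
  assert (Hg : infinite_sum g (L - psum f N)).
  { assert (Hp : forall m, psum g m = psum f m - psum f (Nat.min m N)).
    { induction m. simpl. ring. cbn [psum]. rewrite IHm. unfold g.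
      destruct (Nat.ltb_spec m N).
      - rewrite Nat.min_l by lia. rewrite Nat.min_l by lia. cbn [psum]. ring.
      - rewrite Nat.min_r by lia. rewrite Nat.min_r by lia. ring. }
    intros e He. destruct (HL e He) as [N2 HN2]. exists (Nat.max N2 N). intros n Hn.
    rewrite sum_psum, Hp, Nat.min_r by lia. rewrite <- sum_psum.
    specialize (HN2 n ltac:(lia)). unfold Rdist in *.
    replace (sum_f_R0 f n - psum f N - (L - psum f N)) with (sum_f_R0 (fun i => Cnorm2 (v i)) n - L)
      by (unfold f; ring). auto. }
  assert (El : l = L - psum f N).
  { eapply uniqueness_sum; [exact Hl|]. eapply is_ext; [|exact Hg].
    intros i. unfold g, f. rewrite vsum_Pr. destruct (Nat.ltb i N); unfold Cnorm2; simpl; ring. }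
  subst l. specialize (HN1 (N - 1)%nat ltac:(lia)). unfold Rdist in HN1.
  replace N with (S (N - 1)) by lia. rewrite <- sum_psum. fold f in HN1.
  apply Rabs_def2 in HN1. lra.
Qed.

Lemma expect_psi0 a b : expect_is psi0 (Pr a) (Pr b) (if Nat.eqb a b then cc a * cc a else 0).
Proof.
  exists (fun i => Cmul (Cconj (psi0 i b)) (tensor_left (Pr a) (tensor_right (Pr b) psi0) i b)).
  split.
  - intros i. apply (csum_single _ b); auto.
    intros j Hj. unfold tensor_left, tensor_right, Pr. destruct (Nat.eqb_spec j b); [lia|].
    destruct (Nat.eqb i a); simpl; split; ring.
  - apply (csum_single _ a).
    + intros i Hi. unfold tensor_left, tensor_right, Pr. destruct (Nat.eqb_spec i a); [lia|].
      simpl; split; ring.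
    + unfold tensor_left, tensor_right, Pr, psi0. rewrite !Nat.eqb_refl.
      destruct (Nat.eqb_spec a b); apply Ceq; simpl; ring.
Qed.

Lemma Cqs_p0 : C_qs_3_4 p0.
Proof.
  exists psi0, (fun _ => Pr), (fun _ => Pr). split; [apply unit_psi0|split; [|split]].
  - intros; apply pvm_Pr.
  - intros; apply pvm_Pr.
  - intros x y a b _ _. apply expect_psi0.
Qed.

Theorem corollary1 : ~ (forall p : correlation, C_q_3_4 p <-> C_qs_3_4 p).
Proof.
  intros H. apply (not_Cq p0 (fun a => cc a * cc a)).
  - intros a. pose proof (cc_pos a). nra.
  - intros a b. reflexivity.
  - apply H. apply Cqs_p0.
Qed.
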